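(* Let $0<A<1$, $\lambda_0=A-1$, $L>0$, $\sigma=2\pi/L$ and $c_0\ge2\sqrt{-\lambda_0}$. If $\mu_{max}>0$ is small enough, there exists $\kappa>0$ such that for all $(n,j)\in\mathbb{Z}\times\mathbb{N}$ and $0\le\mu<\mu_{max}$, $$|\operatorname{Re}a^\pm_{n,j,\mu}|\ge2\kappa,\quad |\operatorname{Re}b^-_{n,j,\mu}|\ge2\kappa,\quad\text{and}\quad |\operatorname{Re}b^+_{n,j,\mu}|\ge2\kappa\ \text{ whenever }\operatorname{Re}b^+_{n,j,\mu}<0.$$ Also, there exist $C_\kappa,\overline N,\overline J\ge0$ such that if $|n|\ge\overline N$ or $j\ge\overline J$, then for all $0\le\mu<\mu_{max}$, $$0<\frac{1}{|\operatorname{Re}a^\pm_{n,j,\mu}|-\kappa},\ \frac{1}{|\operatorname{Re}b^\pm_{n,j,\mu}|-\kappa}\le\frac{C_\kappa}{\sqrt{1+\mu n^2+j+|n|}}.$$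
   Context: $\lambda_j=-1+(2j+1)A$. With $\delta_{0j}$ the Kronecker symbol, $a^\pm_{n,j,\mu}=\frac12\Big(-2in\sigma-c_0\pm\sqrt{4\mu n^2\sigma^2+c_0^2+4in\sigma c_0+4[(1-\delta_{0j})\lambda_j-\lambda_0]}\Big)$ and $b^\pm_{n,j,\mu}=\frac12\Big(-2in\sigma-c_0\pm\sqrt{4\mu n^2\sigma^2+c_0^2+4in\sigma c_0+4\lambda_j}\Big)$, where for $z=re^{i\vartheta}$ with $r\ge0$, $\vartheta\in(-\pi,\pi]$, $\sqrt z:=\sqrt r e^{i\vartheta/2}$. *)

(* Defs.v *)
From Stdlib Require Import Reals ZArith.
From Coquelicot Require Import Coquelicot.
Open Scope R_scope.

(* Principal argument of z = x + i y, with values in (-pi, pi]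
   (arg 0 := 0; irrelevant since the modulus is then 0). *)
Definition carg (z : C) : R :=
  let x := fst z in let y := snd z in
  if Rlt_dec 0 x then atan (y / x)
  else if Rlt_dec x 0 then
    (if Rle_dec 0 y then atan (y / x) + PI else atan (y / x) - PI)
  else if Rlt_dec 0 y then PI / 2
  else if Rlt_dec y 0 then - (PI / 2)
  else 0.

Definition csqrt (z : C) : C :=
  (sqrt (Cmod z) * cos (carg z / 2), sqrt (Cmod z) * sin (carg z / 2)).

Definition lambda (A : R) (j : nat) : R := -1 + (2 * INR j + 1) * A.

Definition kron0 (j : nat) : R := if Nat.eqb j 0 then 1 else 0.

Definition ci : C := (0, 1).

(* a^{+/-}_{n,j,mu}; sgn = true for +, false for - *)
Definition a_pm (A sigma c0 : R) (sgn : bool) (n : Z) (j : nat) (mu : R) : C :=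
  let nn := IZR n in
  let D : C := Cplus (Cplus (RtoC (4 * mu * nn ^ 2 * sigma ^ 2 + c0 ^ 2))
                 (Cmult (RtoC (4 * nn * sigma * c0)) ci))
                 (RtoC (4 * ((1 - kron0 j) * lambda A j - lambda A 0))) in
  Cmult (RtoC (1/2))
    (Cplus (Cplus (Cmult (RtoC (-2 * nn * sigma)) ci) (RtoC (- c0)))
           (if sgn then csqrt D else Copp (csqrt D))).

Definition b_pm (A sigma c0 : R) (sgn : bool) (n : Z) (j : nat) (mu : R) : C :=
  let nn := IZR n in
  let D : C := Cplus (Cplus (RtoC (4 * mu * nn ^ 2 * sigma ^ 2 + c0 ^ 2))
                 (Cmult (RtoC (4 * nn * sigma * c0)) ci))
                 (RtoC (4 * lambda A j)) in
  Cmult (RtoC (1/2))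
    (Cplus (Cplus (Cmult (RtoC (-2 * nn * sigma)) ci) (RtoC (- c0)))
           (if sgn then csqrt D else Copp (csqrt D))).

(* Main.v *)
Require Import Defs.
From Stdlib Require Import Reals ZArith Lra Lia Psatz.
From Coquelicot Require Import Coquelicot.
Open Scope R_scope.

Lemma sqrt_scale (x y : R) : x <> 0 ->
  sqrt (x ^ 2 + y ^ 2) = Rabs x * sqrt (1 + (y / x)²).
Proof.
  intros Hx.
  assert (Ht : 0 <= 1 + (y / x)²) by (pose proof (Rle_0_sqr (y/x)); lra).
  pose proof (sqrt_sqrt _ Ht) as Hs.
  pose proof (sqrt_pos (1 + (y / x)²)) as Hp.
  rewrite <- (sqrt_pow2 (Rabs x * sqrt (1 + (y / x)²))).
  2: { apply Rmult_le_pos; [apply Rabs_pos|lra]. }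
  f_equal.
  replace ((Rabs x * sqrt (1 + (y / x)²)) ^ 2) with
     (Rabs x ^ 2 * (sqrt (1 + (y / x)²) * sqrt (1 + (y / x)²))) by ring.
  rewrite Hs, pow2_abs. unfold Rsqr. field. auto.
Qed.

Lemma carg_cos (z : C) : Cmod z * cos (carg z) = fst z.
Proof.
  destruct z as [x y]. unfold Cmod, carg; simpl fst; simpl snd.
  destruct (Rlt_dec 0 x) as [Hx|Hx].
  - rewrite cos_atan, sqrt_scale by lra.
    assert (0 < sqrt (1 + (y / x)²)).
    { apply sqrt_lt_R0. pose proof (Rle_0_sqr (y/x)); lra. }
    rewrite Rabs_right by lra. field. lra.
  - destruct (Rlt_dec x 0) as [Hx'|Hx'].
    + assert (0 < sqrt (1 + (y / x)²)).
      { apply sqrt_lt_R0. pose proof (Rle_0_sqr (y/x)); lra. }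
      assert (Hc : cos (atan (y/x) + PI) = - cos (atan (y/x)) /\
                   cos (atan (y/x) - PI) = - cos (atan (y/x))).
      { split. apply neg_cos. rewrite cos_minus, cos_PI, sin_PI. ring. }
      destruct Hc as [Hc1 Hc2].
      destruct (Rle_dec 0 y); [rewrite Hc1|rewrite Hc2];
      rewrite cos_atan, sqrt_scale by lra; rewrite Rabs_left by lra; field; lra.
    + assert (x = 0) by lra. subst x.
      destruct (Rlt_dec 0 y). rewrite cos_PI2. apply Rmult_0_r.
      destruct (Rlt_dec y 0). rewrite cos_neg, cos_PI2. apply Rmult_0_r.
      rewrite cos_0; simpl; rewrite Rmult_0_l, Rplus_0_l; rewrite Rmult_1_r. assert (y = 0) by lra. subst. rewrite Rmult_0_l, sqrt_0; ring.
Qed.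

Lemma carg_bound (z : C) : - PI <= carg z <= PI.
Proof.
  destruct z as [x y]. unfold carg; simpl fst; simpl snd.
  pose proof PI_RGT_0.
  pose proof (atan_bound (y / x)).
  destruct (Rlt_dec 0 x). lra.
  destruct (Rlt_dec x 0).
  - destruct (Rle_dec 0 y).
    + assert (atan (y / x) <= 0).
      { destruct (Req_dec y 0). subst y. unfold Rdiv. rewrite Rmult_0_l, atan_0. lra.
        rewrite <- atan_0. left. apply atan_increasing.
        unfold Rdiv. assert (0 < y) by lra.
        assert (/ x < 0) by (apply Rinv_lt_0_compat; lra). nra. }
      lra.
    + assert (0 <= atan (y / x)).
      { rewrite <- atan_0. left. apply atan_increasing.
        unfold Rdiv. assert (/ x < 0) by (apply Rinv_lt_0_compat; lra). nra. }
      lra.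
  - destruct (Rlt_dec 0 y). lra. destruct (Rlt_dec y 0); lra.
Qed.

Lemma csqrt_re (z : C) : fst (csqrt z) = sqrt ((Cmod z + fst z) / 2).
Proof.
  unfold csqrt; simpl fst.
  pose proof (carg_cos z) as H1. pose proof (carg_bound z) as H2.
  set (t := carg z) in *.
  assert (Hc : 0 <= cos (t / 2)) by (apply cos_ge_0; lra).
  pose proof (Cmod_ge_0 z) as Hm.
  assert (H3 : cos t = 2 * cos (t/2) * cos (t/2) - 1).
  { rewrite <- cos_2a_cos. f_equal. field. }
  rewrite <- (sqrt_pow2 (sqrt (Cmod z) * cos (t / 2))).
  2: { apply Rmult_le_pos; [apply sqrt_pos|lra]. }
  f_equal.
  replace ((sqrt (Cmod z) * cos (t / 2)) ^ 2) with
     ((sqrt (Cmod z) * sqrt (Cmod z)) * (cos (t / 2) * cos (t/2))) by ring.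
  rewrite sqrt_sqrt by lra. rewrite <- H1, H3. field.
Qed.

Definition SS (X Y : R) : R := sqrt ((sqrt (X ^ 2 + Y ^ 2) + X) / 2).

Lemma Re_gen u v w : Re (Cmult (RtoC (1/2)) (Cplus (Cplus (Cmult (RtoC u) ci) (RtoC v)) w)) = (v + fst w)/2.
Proof. destruct w; unfold Re, Cmult, Cplus, RtoC, ci; simpl; field. Qed.

Lemma D_fst p q r : fst (Cplus (Cplus (RtoC p) (Cmult (RtoC q) ci)) (RtoC r)) = p + r.
Proof. unfold Cmult, Cplus, RtoC, ci; simpl; ring. Qed.
Lemma D_snd p q r : snd (Cplus (Cplus (RtoC p) (Cmult (RtoC q) ci)) (RtoC r)) = q.
Proof. unfold Cmult, Cplus, RtoC, ci; simpl; ring. Qed.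

Lemma csqrt_D p q r : fst (csqrt (Cplus (Cplus (RtoC p) (Cmult (RtoC q) ci)) (RtoC r))) = SS (p + r) q.
Proof. rewrite csqrt_re. unfold Cmod. rewrite D_fst, D_snd. reflexivity. Qed.

Definition sgnR (s : bool) : R := if s then 1 else -1.

Lemma Re_a A sigma c0 s n j mu :
  Re (a_pm A sigma c0 s n j mu) =
  (- c0 + sgnR s * SS (4 * mu * IZR n ^ 2 * sigma ^ 2 + c0 ^ 2 + 4 * ((1 - kron0 j) * lambda A j - lambda A 0))
                      (4 * IZR n * sigma * c0)) / 2.
Proof.
  unfold a_pm. cbv zeta. rewrite Re_gen. destruct s; unfold sgnR.
  - rewrite csqrt_D. field.
  - replace (fst (Copp _)) with (- fst (csqrt (Cplus (Cplus (RtoC (4 * mu * IZR n ^ 2 * sigma ^ 2 + c0 ^ 2))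
                 (Cmult (RtoC (4 * IZR n * sigma * c0)) ci))
                 (RtoC (4 * ((1 - kron0 j) * lambda A j - lambda A 0)))))) by reflexivity.
    rewrite csqrt_D. field.
Qed.

Lemma Re_b A sigma c0 s n j mu :
  Re (b_pm A sigma c0 s n j mu) =
  (- c0 + sgnR s * SS (4 * mu * IZR n ^ 2 * sigma ^ 2 + c0 ^ 2 + 4 * lambda A j)
                      (4 * IZR n * sigma * c0)) / 2.
Proof.
  unfold b_pm. cbv zeta. rewrite Re_gen. destruct s; unfold sgnR.
  - rewrite csqrt_D. field.
  - replace (fst (Copp _)) with (- fst (csqrt (Cplus (Cplus (RtoC (4 * mu * IZR n ^ 2 * sigma ^ 2 + c0 ^ 2))
                 (Cmult (RtoC (4 * IZR n * sigma * c0)) ci))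
                 (RtoC (4 * lambda A j))))) by reflexivity.
    rewrite csqrt_D. field.
Qed.

Lemma SS_facts X Y : 0 <= X ->
  0 <= SS X Y /\ SS X Y ^ 2 = (sqrt (X ^ 2 + Y ^ 2) + X) / 2 /\
  X <= SS X Y ^ 2 /\ Rabs Y / 2 <= SS X Y ^ 2.
Proof.
  intros HX. unfold SS.
  set (R0 := sqrt (X ^ 2 + Y ^ 2)).
  assert (HR : 0 <= R0) by apply sqrt_pos.
  assert (HR2 : R0 * R0 = X ^ 2 + Y ^ 2) by (apply sqrt_sqrt; nra).
  assert (HRX : X <= R0) by nra.
  assert (HRY : Rabs Y <= R0).
  { assert (Rabs Y ^ 2 = Y ^ 2) by apply pow2_abs. pose proof (Rabs_pos Y). nra. }
  assert (Hs : sqrt ((R0 + X) / 2) ^ 2 = (R0 + X) / 2).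
  { simpl. rewrite Rmult_1_r. apply sqrt_sqrt. lra. }
  split. apply sqrt_pos. split. exact Hs. rewrite Hs. lra.
Qed.

Lemma SS_gap X Y c0 : 0 <= X -> 0 < c0 -> SS X Y < c0 ->
  0 < 4 * c0 ^ 4 - 4 * c0 ^ 2 * X - Y ^ 2 <= 16 * c0 ^ 3 * (c0 - SS X Y).
Proof.
  intros HX Hc HS.
  destruct (SS_facts X Y HX) as [H0 [H1 [H2 H3]]].
  set (S := SS X Y) in *.
  set (R0 := sqrt (X ^ 2 + Y ^ 2)) in *.
  assert (HR2 : R0 * R0 = X ^ 2 + Y ^ 2) by (apply sqrt_sqrt; nra).
  assert (HY : Y ^ 2 = 4 * S ^ 2 * (S ^ 2 - X)).
  { assert (R0 = 2 * S ^ 2 - X) by lra. nra. }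
  assert (E : 4 * c0 ^ 4 - 4 * c0 ^ 2 * X - Y ^ 2 = 4 * (c0 - S) * (c0 + S) * (c0 ^ 2 + S ^ 2 - X)).
  { rewrite HY. ring. }
  rewrite E. split.
  - assert (0 < c0 - S) by lra. assert (0 < c0 + S) by lra.
    assert (0 < c0 ^ 2 + S ^ 2 - X) by nra.
    apply Rmult_lt_0_compat; [|lra]. apply Rmult_lt_0_compat; lra.
  - assert (0 < c0 - S) by lra.
    assert ((c0 + S) * (c0 ^ 2 + S ^ 2 - X) <= 4 * c0 ^ 3).
    { assert ((c0 + S) * (c0 ^ 2 + S ^ 2 - X) <= (c0 + S) * (c0 ^ 2 + S ^ 2)) by nra.
      assert (S ^ 2 <= c0 ^ 2) by nra. nra. }
    nra.
Qed.

Lemma fmin1 (g : nat -> R) J : exists e, 0 < e /\ forall j, (j < J)%nat -> 0 < g j -> e <= g j.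
Proof.
  induction J as [|J IH].
  - exists 1. split. lra. intros j Hj. lia.
  - destruct IH as [e [He H]].
    destruct (Rlt_dec 0 (g J)) as [Hg|Hg].
    + exists (Rmin e (g J)). split. apply Rmin_pos; lra.
      intros j Hj Hp. destruct (Nat.eq_dec j J) as [->|Hne].
      apply Rmin_r. apply Rle_trans with e. apply Rmin_l. apply H; [lia|lra].
    + exists e. split. lra. intros j Hj Hp. destruct (Nat.eq_dec j J) as [->|Hne].
      lra. apply H; [lia|lra].
Qed.

Lemma fmin2 (f : nat -> nat -> R) N J : exists e, 0 < e /\
  forall n j, (n < N)%nat -> (j < J)%nat -> 0 < f n j -> e <= f n j.
Proof.
  induction N as [|N IH].
  - exists 1. split. lra. intros n j Hn. lia.
  - destruct IH as [e [He H]].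
    destruct (fmin1 (f N) J) as [e' [He' H']].
    exists (Rmin e e'). split. apply Rmin_pos; lra.
    intros n j Hn Hj Hp. destruct (Nat.eq_dec n N) as [->|Hne].
    apply Rle_trans with e'. apply Rmin_r. apply H'; auto.
    apply Rle_trans with e. apply Rmin_l. apply H; auto; lia.
Qed.

Lemma IZR_sq_abs n : IZR n ^ 2 = INR (Z.abs_nat n) ^ 2.
Proof. rewrite INR_IZR_INZ, Nat2Z.inj_abs_nat, abs_IZR, pow2_abs. reflexivity. Qed.

Lemma eps_lemma A sigma : 0 < A < 1 -> 0 < sigma -> exists e, 0 < e /\
  forall (n : Z) (j : nat), 0 < - lambda A j - IZR n ^ 2 * sigma ^ 2 ->
     e <= - lambda A j - IZR n ^ 2 * sigma ^ 2.
Proof.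
  intros HA Hs.
  destruct (INR_unbounded (1 / (2 * A))) as [J HJ].
  destruct (INR_unbounded (1 / sigma)) as [N HN].
  destruct (fmin2 (fun m j => - lambda A j - INR m ^ 2 * sigma ^ 2) N J) as [e [He H]].
  exists e. split. exact He. intros n j Hp.
  rewrite IZR_sq_abs in *. apply (H (Z.abs_nat n) j); auto.
  - apply INR_lt. set (m := INR (Z.abs_nat n)) in *.
    assert (0 <= m) by apply pos_INR.
    assert (0 <= INR j) by apply pos_INR.
    unfold lambda in Hp.
    assert (m * sigma < 1) by nra.
    apply Rle_lt_trans with (1 / sigma); [|lra].
    apply Rmult_le_reg_r with sigma; [lra|]. unfold Rdiv. rewrite Rmult_assoc, Rinv_l; lra.
  - apply INR_lt. 
    assert (0 <= INR (Z.abs_nat n) ^ 2 * sigma ^ 2) by (apply Rmult_le_pos; apply pow2_ge_0).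
    unfold lambda in Hp.
    apply Rle_lt_trans with (1 / (2 * A)); [|lra].
    apply Rmult_le_reg_r with (2 * A); [lra|]. unfold Rdiv. rewrite Rmult_assoc, Rinv_l; lra.
Qed.

Lemma abs_ge t u : u <= t \/ u <= - t -> u <= Rabs t.
Proof. intros [H|H]. pose proof (Rle_abs t); lra. pose proof (Rle_abs (-t)); rewrite Rabs_Ropp in *; lra. Qed.

Lemma tail S c0 kap k Q t : 0 < k -> 0 <= kap -> 0 <= c0 -> 0 <= S ->
  k * Q - k - 2 <= S ^ 2 -> 2 * k + 4 <= k * Q -> 8 * (c0 + 2 * kap) ^ 2 <= k * Q ->
  (S - c0) / 2 <= t ->
  0 < / (t - kap) /\ / (t - kap) <= (4 / sqrt (k / 2)) / sqrt Q.
Proof.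
  intros Hk Hkap Hc HS HS2 HQ1 HQ2 Ht.
  assert (HQ : 0 < Q) by nra.
  pose proof (sqrt_lt_R0 Q HQ) as Hs. pose proof (sqrt_sqrt Q (Rlt_le _ _ HQ)) as Hs2.
  assert (Hk2 : 0 < k / 2) by lra.
  pose proof (sqrt_lt_R0 _ Hk2) as Hr. pose proof (sqrt_sqrt _ (Rlt_le _ _ Hk2)) as Hr2.
  set (s := sqrt Q) in *. set (r := sqrt (k / 2)) in *.
  assert (H1 : (r * s) ^ 2 <= S ^ 2) by nra.
  assert (H2 : r * s <= S).
  { assert (0 < r * s) by nra. nra. }
  assert (H3 : 2 * (c0 + 2 * kap) <= r * s).
  { assert (0 < r * s) by nra. nra. }
  assert (H4 : r * s / 4 <= t - kap) by lra.
  assert (H5 : 0 < r * s / 4) by nra.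
  split. apply Rinv_0_lt_compat; lra.
  replace (4 / r / s) with (/ (r * s / 4)) by (field; lra).
  apply Rinv_le_contravar; lra.
Qed.

Lemma Lam_a A j : 0 < A < 1 ->
  Rmin (1 - A) (2 * A) <= (1 - kron0 j) * lambda A j - lambda A 0 /\
  2 * INR j * A <= (1 - kron0 j) * lambda A j - lambda A 0.
Proof.
  intros HA. unfold lambda, kron0. destruct j as [|j'].
  - simpl. pose proof (Rmin_l (1-A) (2*A)). lra.
  - simpl Nat.eqb. pose proof (Rmin_r (1-A) (2*A)).
    assert (1 <= INR (S j')) by (apply (le_INR 1); lia).
    simpl (INR 0). nra.
Qed.

Theorem mainTheorem6 :
  forall (A L c0 : R),
    0 < A < 1 -> 0 < L ->
    let lambda0 := A - 1 in
    let sigma := 2 * PI / L in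
    2 * sqrt (- lambda0) <= c0 ->
    exists mu0 : R, 0 < mu0 /\
    forall mu_max : R, 0 < mu_max <= mu0 ->
    exists kappa : R, 0 < kappa /\
      (forall (n : Z) (j : nat) (mu : R), 0 <= mu < mu_max ->
         (forall s : bool, 2 * kappa <= Rabs (Re (a_pm A sigma c0 s n j mu))) /\
         2 * kappa <= Rabs (Re (b_pm A sigma c0 false n j mu)) /\
         (Re (b_pm A sigma c0 true n j mu) < 0 ->
            2 * kappa <= Rabs (Re (b_pm A sigma c0 true n j mu)))) /\
      (exists C_kappa Nbar Jbar : R, 0 <= C_kappa /\ 0 <= Nbar /\ 0 <= Jbar /\
         forall (n : Z) (j : nat),
           (Nbar <= Rabs (IZR n) \/ Jbar <= INR j) ->
           forall mu : R, 0 <= mu < mu_max ->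
           forall s : bool,
             let bound := C_kappa / sqrt (1 + mu * IZR n ^ 2 + INR j + Rabs (IZR n)) in
             (0 < / (Rabs (Re (a_pm A sigma c0 s n j mu)) - kappa) /\
              / (Rabs (Re (a_pm A sigma c0 s n j mu)) - kappa) <= bound) /\
             (0 < / (Rabs (Re (b_pm A sigma c0 s n j mu)) - kappa) /\
              / (Rabs (Re (b_pm A sigma c0 s n j mu)) - kappa) <= bound)).
Proof.
  intros A L c0 HA HL lambda0 sigma Hc0.
  assert (Hsig : 0 < sigma).
  { unfold sigma. pose proof PI_RGT_0. unfold Rdiv. apply Rmult_lt_0_compat; [lra|].
    apply Rinv_0_lt_compat; lra. }
  assert (Hsq : 0 < sqrt (- lambda0)) by (apply sqrt_lt_R0; unfold lambda0; lra).
  assert (Hc : 0 < c0) by lra.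
  assert (Hc2 : 4 * (1 - A) <= c0 ^ 2).
  { pose proof (sqrt_sqrt (- lambda0)) as E. unfold lambda0 in *.
    assert (sqrt (- (A - 1)) * sqrt (- (A - 1)) = - (A - 1)) by (apply E; lra). nra. }
  clearbody sigma. clear Hsq Hc0.
  destruct (eps_lemma A sigma HA Hsig) as [eps [Heps Heps']].
  exists (eps / 2). split. lra.
  intros mu_max Hmm.
  set (m := Rmin (1 - A) (2 * A)).
  assert (Hm : 0 < m) by (apply Rmin_pos; lra).
  set (g1 := sqrt (c0 ^ 2 + 4 * m) - c0).
  assert (Hg1 : 0 < g1).
  { unfold g1. assert (sqrt (c0 ^ 2) < sqrt (c0 ^ 2 + 4 * m)).
    { apply sqrt_lt_1_alt. split. apply pow2_ge_0. lra. }
    rewrite sqrt_pow2 in H by lra. lra. }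
  set (G := Rmin (g1 / 2) (Rmin (c0 / 2) (eps / (4 * c0)))).
  assert (HG : 0 < G).
  { unfold G. apply Rmin_pos. lra. apply Rmin_pos. lra.
    unfold Rdiv. apply Rmult_lt_0_compat. lra. apply Rinv_0_lt_compat. lra. }
  assert (HG1 : G <= g1 / 2) by apply Rmin_l.
  assert (HG2 : G <= c0 / 2) by (eapply Rle_trans; [apply Rmin_r|apply Rmin_l]).
  assert (HG3 : G <= eps / (4 * c0)) by (eapply Rle_trans; [apply Rmin_r|apply Rmin_r]).
  exists (G / 2). split. lra. split.
  -
    intros n j mu Hmu.
    set (nn := IZR n) in *.
    assert (Hmn : 0 <= mu * nn ^ 2 * sigma ^ 2).
    { apply Rmult_le_pos. apply Rmult_le_pos. lra. apply pow2_ge_0. apply pow2_ge_0. }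
    destruct (Lam_a A j HA) as [La1 La2].
    assert (Lb : A - 1 <= lambda A j).
    { unfold lambda. pose proof (pos_INR j). nra. }
    assert (Hrepl : 2 * (G / 2) = G) by field. rewrite Hrepl. clear Hrepl.
    split; [|split].
    + intros s. rewrite Re_a. fold nn.
      set (X := 4 * mu * nn ^ 2 * sigma ^ 2 + c0 ^ 2 + 4 * ((1 - kron0 j) * lambda A j - lambda A 0)).
      assert (HX : c0 ^ 2 + 4 * m <= X) by (unfold X, m in *; nra).
      assert (HXa : 0 <= X) by nra.
      destruct (SS_facts X (4 * nn * sigma * c0) HXa) as [S0 [S1 [S2 S3]]].
      set (S := SS X (4 * nn * sigma * c0)) in *.
      destruct s; unfold sgnR; apply abs_ge.
      * left. assert (sqrt (c0 ^ 2 + 4 * m) <= S).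
        { rewrite <- (sqrt_pow2 S) by lra. apply sqrt_le_1_alt. lra. }
        unfold g1 in HG1. lra.
      * right. lra.
    + rewrite Re_b. fold nn. unfold sgnR. apply abs_ge. right.
      set (X := 4 * mu * nn ^ 2 * sigma ^ 2 + c0 ^ 2 + 4 * lambda A j).
      assert (HXb : 0 <= X) by (unfold X; nra).
      destruct (SS_facts X (4 * nn * sigma * c0) HXb) as [S0 [S1 [S2 S3]]].
      lra.
    + rewrite Re_b. fold nn. unfold sgnR. intros Hneg. apply abs_ge. right.
      set (X := 4 * mu * nn ^ 2 * sigma ^ 2 + c0 ^ 2 + 4 * lambda A j) in *.
      assert (HX : 0 <= X) by (unfold X; nra).
      destruct (SS_facts X (4 * nn * sigma * c0) HX) as [S0 [S1 [S2 S3]]].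
      set (S := SS X (4 * nn * sigma * c0)) in *.
      assert (HSc : S < c0) by lra.
      destruct (SS_gap X (4 * nn * sigma * c0) c0 HX Hc HSc) as [Gp1 Gp2].
      fold S in Gp2.
      assert (E : 4 * c0 ^ 4 - 4 * c0 ^ 2 * X - (4 * nn * sigma * c0) ^ 2
                  = 16 * c0 ^ 2 * (- lambda A j - nn ^ 2 * sigma ^ 2 - mu * nn ^ 2 * sigma ^ 2))
        by (unfold X; ring).
      rewrite E in Gp1, Gp2.
      set (d := - lambda A j - nn ^ 2 * sigma ^ 2 - mu * nn ^ 2 * sigma ^ 2) in *.
      assert (Hd : 0 < d) by nra.
      assert (Hv : 0 < - lambda A j - nn ^ 2 * sigma ^ 2) by (unfold d in Hd; lra).
      pose proof (Heps' n j Hv) as Hev. fold nn in Hev.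
      assert (Hn1 : nn ^ 2 * sigma ^ 2 <= 1).
      { unfold lambda in Hv. pose proof (pos_INR j). nra. }
      assert (Hmu2 : mu * nn ^ 2 * sigma ^ 2 <= mu).
      { replace (mu * nn ^ 2 * sigma ^ 2) with (mu * (nn ^ 2 * sigma ^ 2)) by ring. nra. }
      assert (Hd2 : eps / 2 <= d) by (unfold d; lra).
      assert (Hcs : eps / 2 <= c0 * (c0 - S)).
      { assert (d <= c0 * (c0 - S)).
        { apply Rmult_le_reg_l with (16 * c0 ^ 2). nra.
          replace (16 * c0 ^ 2 * (c0 * (c0 - S))) with (16 * c0 ^ 3 * (c0 - S)) by ring. lra. }
        lra. }
      apply Rle_trans with (eps / (4 * c0)); [exact HG3|].
      replace (eps / (4 * c0)) with ((eps / 2) * / (2 * c0)) by (field; lra).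
      replace (- ((- c0 + 1 * S) / 2)) with (c0 * (c0 - S) * / (2 * c0)) by (field; lra).
      apply Rmult_le_compat_r; [left; apply Rinv_0_lt_compat; lra | lra].
  - set (k := Rmin (2 * sigma ^ 2) (Rmin (4 * A) (sigma * c0))).
    assert (Hk : 0 < k).
    { unfold k. apply Rmin_pos. nra. apply Rmin_pos; nra. }
    assert (Hk1 : k <= 2 * sigma ^ 2) by apply Rmin_l.
    assert (Hk2 : k <= 4 * A) by (eapply Rle_trans; [apply Rmin_r|apply Rmin_l]).
    assert (Hk3 : k <= sigma * c0) by (eapply Rle_trans; [apply Rmin_r|apply Rmin_r]).
    set (Q0 := (2 * k + 4) / k + 8 * (c0 + 2 * (G / 2)) ^ 2 / k).
    assert (HQ0a : 0 <= (2 * k + 4) / k).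
    { unfold Rdiv. apply Rmult_le_pos. lra. left; apply Rinv_0_lt_compat; lra. }
    assert (HQ0b : 0 <= 8 * (c0 + 2 * (G / 2)) ^ 2 / k).
    { unfold Rdiv. apply Rmult_le_pos. nra. left; apply Rinv_0_lt_compat; lra. }
    assert (HkQ0 : k * Q0 = 2 * k + 4 + 8 * (c0 + 2 * (G / 2)) ^ 2) by (unfold Q0; field; lra).
    exists (4 / sqrt (k / 2)), Q0, Q0.
    split. { unfold Rdiv. apply Rmult_le_pos. lra. left; apply Rinv_0_lt_compat, sqrt_lt_R0; lra. }
    split. unfold Q0; lra. split. unfold Q0; lra.
    intros n j Hnj mu Hmu s. cbv zeta.
    set (nn := IZR n) in *.
    set (Q := 1 + mu * nn ^ 2 + INR j + Rabs nn).
    assert (Hmn0 : 0 <= mu * nn ^ 2) by (apply Rmult_le_pos; [lra|apply pow2_ge_0]).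
    assert (Hmn : 0 <= mu * nn ^ 2 * sigma ^ 2) by (apply Rmult_le_pos; [lra|apply pow2_ge_0]).
    pose proof (pos_INR j) as Hj0. pose proof (Rabs_pos nn) as Hn0.
    assert (HQ : Q0 <= Q) by (unfold Q; lra).
    assert (HkQ : k * Q0 <= k * Q) by (apply Rmult_le_compat_l; lra).
    pose proof (pow2_ge_0 (c0 + 2 * (G / 2))) as Hsq2.
    assert (HY : Rabs (4 * nn * sigma * c0) = 4 * sigma * c0 * Rabs nn).
    { rewrite !Rabs_mult. rewrite (Rabs_pos_eq 4), (Rabs_pos_eq sigma), (Rabs_pos_eq c0); lra. }
    assert (Key : forall X, 0 <= X -> 4 * mu * nn ^ 2 * sigma ^ 2 + 8 * INR j * A - 4 <= X ->
              k * Q - k - 2 <= SS X (4 * nn * sigma * c0) ^ 2).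
    { intros X HX HX2.
      destruct (SS_facts X (4 * nn * sigma * c0) HX) as [S0 [S1 [S2 S3]]].
      rewrite HY in S3.
      assert (B1 : k * (mu * nn ^ 2) <= 2 * sigma ^ 2 * (mu * nn ^ 2)) by (apply Rmult_le_compat_r; lra).
      assert (B2 : k * INR j <= 4 * A * INR j) by (apply Rmult_le_compat_r; lra).
      assert (B3 : k * Rabs nn <= sigma * c0 * Rabs nn) by (apply Rmult_le_compat_r; lra).
      unfold Q. 
      replace (k * (1 + mu * nn ^ 2 + INR j + Rabs nn) - k - 2)
        with (k * (mu * nn ^ 2) + k * INR j + k * Rabs nn - 2) by ring.
      assert (E : 4 * mu * nn ^ 2 * sigma ^ 2 = 4 * (sigma ^ 2 * (mu * nn ^ 2))) by ring.
      lra. }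
    destruct (Lam_a A j HA) as [La1 La2].
    assert (Lb : A - 1 <= lambda A j).
    { unfold lambda. nra. }
    assert (Lb2 : -1 + 2 * INR j * A <= lambda A j).
    { unfold lambda. nra. }
    split.
    + rewrite Re_a. fold nn.
      set (X := 4 * mu * nn ^ 2 * sigma ^ 2 + c0 ^ 2 + 4 * ((1 - kron0 j) * lambda A j - lambda A 0)).
      assert (HX : 0 <= X) by (unfold X; nra).
      assert (HX2 : 4 * mu * nn ^ 2 * sigma ^ 2 + 8 * INR j * A - 4 <= X) by (unfold X; nra).
      pose proof (Key X HX HX2) as K.
      destruct (SS_facts X (4 * nn * sigma * c0) HX) as [S0 _].
      apply (tail (SS X (4 * nn * sigma * c0)) c0 (G / 2) k Q); try lra.
      destruct s; unfold sgnR; apply abs_ge; [left|right]; lra.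
    + rewrite Re_b. fold nn.
      set (X := 4 * mu * nn ^ 2 * sigma ^ 2 + c0 ^ 2 + 4 * lambda A j).
      assert (HX : 0 <= X) by (unfold X; nra).
      assert (HX2 : 4 * mu * nn ^ 2 * sigma ^ 2 + 8 * INR j * A - 4 <= X) by (unfold X; nra).
      pose proof (Key X HX HX2) as K.
      destruct (SS_facts X (4 * nn * sigma * c0) HX) as [S0 _].
      apply (tail (SS X (4 * nn * sigma * c0)) c0 (G / 2) k Q); try lra.
      destruct s; unfold sgnR; apply abs_ge; [left|right]; lra.
Qed.
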